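(* Let $\theta^*\in\mathbb{R}^d$ with $\|\theta^*\|_2=\sqrt{d}$ and $\sigma>0$, and let $(x^L,y^L)$ be drawn from the $(\theta^*,\sigma)$-Gaussian mixture model. Suppose $v\in\mathbb{R}^d$ is a (fixed) unit vector such that $\big\|v-\frac{\theta^*}{\sqrt{d}}\big\|_2\le\tau$ for some constant $\tau<\sqrt{2}$. Then with probability at least $1-\exp\!\Big(-\frac{d(1-\frac{\tau^2}{2})^2}{2\sigma^2}\Big)$, we have $\mathrm{sign}(y^L\cdot v^\top x^L)\,v^\top\theta^*>0$.
   Context: The $(\theta^*,\sigma)$-Gaussian mixture model is the distribution on $\mathbb{R}^d\times\{\pm1\}$ obtained by drawing $y\in\{\pm1\}$ uniformly at random and then $x\sim\mathcal{N}(y\theta^*,\sigma^2 I_d)$. *)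

(* Defs.v *)
From HB Require Import structures.
From mathcomp Require Import all_boot all_order all_algebra.
From mathcomp Require Import all_classical all_reals all_analysis.
Set Implicit Arguments. Unset Strict Implicit. Unset Printing Implicit Defensive.
Import Order.TTheory GRing.Theory Num.Theory.
Local Open Scope classical_set_scope.
Local Open Scope ring_scope.

Definition l2norm (R : realType) (d : nat) (u : 'I_d -> R) : R :=
  Num.sqrt (\sum_(i < d) u i ^+ 2).

Definition dotp (R : realType) (d : nat) (u w : 'I_d -> R) : R :=
  \sum_(i < d) u i * w i.

(* (x, y) : (random vector in R^d, random label) defined on the probability
   space (T, P) is distributed according to the (theta, sigma)-Gaussian
   mixture model: y is uniform on {+1,-1} and, conditionally on y,
   x ~ N(y theta, sigma^2 I_d), i.e. the coordinates of x are independent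
   with x_i ~ N(y theta_i, sigma^2).  This is stated as the exact joint law on
   all measurable rectangles (which determines the joint distribution):
     P(y = y0, x_i in A_i for all i) = 1/2 * prod_i N(y0 theta_i, sigma^2)(A_i)
   for y0 in {+1,-1}.  (Taking A_i = R gives P(y = 1) = P(y = -1) = 1/2.) *)
Definition gaussian_mixture (R : realType) (dT : measure_display)
    (T : measurableType dT) (P : probability T R) (d : nat)
    (theta : 'I_d -> R) (sigma : R)
    (x : 'I_d -> {RV P >-> R}) (y : {RV P >-> R}) : Prop :=
  forall (y0 : R) (A : 'I_d -> set R),
    (y0 = 1 \/ y0 = -1) ->
    (forall i, measurable (A i)) ->
    P (y @^-1` [set y0] `&` \bigcap_(i in [set: 'I_d]) (x i @^-1` A i)) =
      ((2%:R)^-1%:E * \prod_(i < d) normal_prob (y0 * theta i) sigma (A i))%E.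
Arguments gaussian_mixture {R dT T} P {d} theta sigma x y.

(* Main.v *)
Require Import Defs.
From HB Require Import structures.
From mathcomp Require Import all_boot all_order all_algebra.
From mathcomp Require Import all_classical all_reals all_analysis.
From mathcomp Require Import measurable_realfun lebesgue_integral.
From mathcomp Require Import ring lra.
Import Order.TTheory GRing.Theory Num.Theory.
Local Open Scope classical_set_scope.
Local Open Scope ring_scope.

Section gm_transfer_sec.
Context d (T : measurableType d) d' (U : measurableType d') (R : realType).
Local Open Scope ereal_scope.
Import HBNNSimple.

Lemma gm_transfer (P : {measure set T -> \bar R}) (D : set T) (X : T -> U) (h : T -> R)
  (Q : {measure set U -> \bar R}) (k : R) :
  measurable D -> measurable_fun D X -> measurable_fun D h ->
  (forall w, D w -> (0 <= h w)%R) -> (0 <= k)%R ->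
  (forall B, measurable B ->
     \int[P]_(w in D) (\1_B (X w) * h w)%:E = k%:E * Q B) ->
  forall g : U -> R, measurable_fun setT g -> (forall t, (0 <= g t)%R) ->
  \int[P]_(w in D) (g (X w) * h w)%:E = k%:E * \int[Q]_t (g t)%:E.
Proof.
move=> mD mX mh h0 k0 HB g mg g0.
have mgE : measurable_fun setT (EFin \o g) by apply/measurable_EFinP.
pose f_ := nnsfun_approx measurableT mgE.
pose kk := NngNum k0.
have conv t : (EFin \o f_^~ t) @ \oo --> (g t)%:E.
  by apply: cvg_nnsfun_approx => // x _; rewrite lee_fin.
have nd t : nondecreasing_seq (f_^~ t).
  by move=> m n mn; exact/lefP/nd_nnsfun_approx.
have mfX (s : {nnsfun U >-> R}) : measurable_fun D (fun w => s (X w)).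
  by apply: measurableT_comp => //.
transitivity (limn (fun n => \int[P]_(w in D) (f_ n (X w) * h w)%:E)).
  rewrite -monotone_convergence//.
  - apply: eq_integral => w /[!inE] Dw; apply/esym/cvg_lim => //.
    under eq_fun do rewrite EFinM.
    rewrite EFinM; apply: cvgeZr => //; exact: conv.
  - by move=> n; apply/measurable_EFinP; apply: measurable_funM.
  - by move=> n w Dw; rewrite lee_fin mulr_ge0// h0.
  - by move=> w Dw m n mn; rewrite lee_fin ler_wpM2r ?h0//; exact: nd.
transitivity (limn (fun n => \int[mscale kk Q]_t (f_ n t)%:E)); last first.
  have -> : k%:E * \int[Q]_t (g t)%:E = \int[mscale kk Q]_t (g t)%:E.
    by rewrite ge0_integral_mscale// => t _; rewrite lee_fin.
  rewrite -monotone_convergence//.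
  - by apply: eq_integral => t _; apply/cvg_lim => //; exact: conv.
  - by move=> n; apply/measurable_EFinP.
  - by move=> n t _; rewrite lee_fin.
  - move=> t _ m n mn /=; rewrite lee_fin; exact: nd.
suff E : forall n, \int[P]_(w in D) (f_ n (X w) * h w)%:E = \int[mscale kk Q]_t (f_ n t)%:E.
  by rewrite (funext E).
move=> n.
set s := f_ n.
have ge0ri r z : (0 <= r * \1_(s @^-1` [set r]) z)%R.
  by have := nnfun_muleindic_ge0 s r z; rewrite -EFinM lee_fin.
have pt w : (s (X w) * h w)%:E = \sum_(r \in range s) (r%:E * (\1_(s @^-1` [set r]) (X w) * h w)%:E).
  rewrite EFinM fimfunE -fsumEFin// ge0_mule_fsuml; last by move=> r; rewrite lee_fin ge0ri.
  by apply: eq_fsbigr => r _; rewrite -!EFinM mulrA.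
have ms r : measurable (s @^-1` [set r]) by [].
under eq_integral do rewrite pt.
rewrite ge0_integral_fsum//; last 2 first.
  - move=> r; apply/measurable_EFinP; apply: measurable_funM => //.
    apply: measurable_funM => //; apply: measurableT_comp => //.
  - by move=> r w Dw; rewrite -EFinM lee_fin mulrA mulr_ge0 ?h0// ge0ri.
rewrite ge0_integral_mscale//; last 2 first.
  - by apply/measurable_EFinP.
  - by move=> t _; rewrite lee_fin.
under [X in _ = _ * X]eq_integral do rewrite fimfunE -fsumEFin//.
rewrite ge0_integral_fsum//; last 2 first.
  - by move=> r; apply/measurable_EFinP; apply: measurable_funM.
  - by move=> r t _; rewrite lee_fin ge0ri.
rewrite ge0_mule_fsumr; last first.
  by move=> r; apply: integral_ge0 => t _; rewrite lee_fin ge0ri.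
apply: eq_fsbigr => r /[!inE] -[t _ <-].
rewrite ge0_integralZl//; last 3 first.
  - apply/measurable_EFinP; apply: measurable_funM => //; apply: measurableT_comp => //.
  - by move=> w Dw; rewrite lee_fin mulr_ge0 ?h0.
  - by rewrite lee_fin.
rewrite HB//; under eq_integral do rewrite EFinM.
rewrite ge0_integralZl//; last 2 first.
  - by apply/measurable_EFinP; exact: measurable_indic.
  - by rewrite lee_fin.
by rewrite integral_indic// setIT muleCA.
Qed.
End gm_transfer_sec.
Section mgf.
Context (R : realType).
Local Open Scope ereal_scope.

Lemma normal_pdf_shift (m s a t : R) : s != 0%R ->
  (expR (a * t) * normal_pdf m s t =
   expR (a * m + a ^+ 2 * s ^+ 2 / 2) * normal_pdf (m + a * s ^+ 2) s t)%R.
Proof.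
move=> s0; rewrite /normal_pdf (negbTE s0) /normal_fun mulrCA [RHS]mulrCA.
congr (_ * _)%R; rewrite -!expRD; congr expR.
by field.
Qed.

Lemma normal_prob_integral (m s : R) (g : R -> R) : measurable_fun setT g -> (forall t, (0 <= g t)%R) ->
  \int[normal_prob m s]_t (g t)%:E = \int[lebesgue_measure]_t (g t * normal_pdf m s t)%:E.
Proof.
move=> mg g0.
have H := @gm_transfer _ (measurableTypeR R) _ (measurableTypeR R) R lebesgue_measure setT id (normal_pdf m s) (normal_prob m s) 1%R
  measurableT (@measurable_id _ _ setT) (measurable_normal_pdf m s) (fun w _ => normal_pdf_ge0 m s w) ler01.
have HB : forall B, measurable B -> \int[lebesgue_measure]_(w in setT) (\1_B (id w) * normal_pdf m s w)%:E = 1%:E * normal_prob m s B.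
  move=> B mB; rewrite mul1e /normal_prob [RHS]integral_mkcond; apply: eq_integral => t _ /=.
  by rewrite /patch indicE; case: ifPn => _; rewrite ?mul1r ?mul0r.
by rewrite -[LHS]mul1e -(H HB g mg g0).
Qed.

Lemma normal_mgf (m s a : R) : s != 0%R ->
  \int[normal_prob m s]_t (expR (a * t))%:E = (expR (a * m + a ^+ 2 * s ^+ 2 / 2))%:E.
Proof.
move=> s0; rewrite normal_prob_integral//; last first.
  by apply: measurableT_comp.
under eq_integral do rewrite normal_pdf_shift// EFinM.
rewrite integralZl//; last exact: integrable_normal_pdf.
by rewrite integral_normal_pdf mule1.
Qed.
End mgf.
Lemma measurable_prod_pred d0 (T0 : measurableType d0) (R : realType) (D : set T0) n
  (Pr : pred 'I_n) (f : 'I_n -> T0 -> R) :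
  (forall i, measurable_fun D (f i)) -> measurable_fun D (fun w => \prod_(i < n | Pr i) f i w).
Proof.
move=> mf.
have -> : (fun w => \prod_(i < n | Pr i) f i w) =
    (fun w => \prod_(i < n) (if Pr i then f i w else 1)).
  by apply/funext => w; rewrite big_mkcond.
apply: measurable_prod => i _; case: (Pr i) => //; exact: measurable_cst.
Qed.

Section gm_factor_sec.
Context (R : realType) (dT : measure_display) (T : measurableType dT)
  (P : probability T R) (d : nat) (theta : 'I_d -> R) (sigma : R)
  (xL : 'I_d -> {RV P >-> R}) (yL : {RV P >-> R}).
Hypothesis GM : gaussian_mixture P theta sigma xL yL.
Variable y0 : R.
Hypothesis hy0 : y0 = 1 \/ y0 = -1.
Variables (g : 'I_d -> R -> R) (G : 'I_d -> R).
Hypothesis mg : forall i, measurable_fun setT (g i).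
Hypothesis g0 : forall i t, 0 <= g i t.
Hypothesis gG : forall i, (\int[normal_prob (y0 * theta i) sigma]_t (g i t)%:E = (G i)%:E)%E.

Let F := yL @^-1` [set y0].
Let N i := normal_prob (y0 * theta i) sigma.

Let mF : measurable F.
Proof.
by rewrite /F -[_ @^-1` _]setTI; apply: (measurable_funPT yL).
Qed.

Let mxL i : measurable_fun F (xL i).
Proof. exact/measurable_funTS/measurable_funPT. Qed.

Let G0 i : 0 <= G i.
Proof. rewrite -lee_fin -gG; apply: integral_ge0 => t _; by rewrite lee_fin. Qed.

Let Nfin i A : measurable A -> N i A \is a fin_num.
Proof. by move=> mA; rewrite fin_num_measure. Qed.

Let S0 A : (forall i, measurable (A i)) ->
  (\int[P]_(w in F) (\prod_i \1_(A i) (xL i w))%:E = (2^-1 * \prod_i fine (N i (A i)))%:E)%E.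
Proof.
move=> mA.
set C := \bigcap_(i in [set: 'I_d]) (xL i @^-1` A i).
have mC : measurable C.
  apply: fin_bigcap_measurable => // i _.
  by rewrite -[_ @^-1` _]setTI; apply: (measurable_funPT (xL i)).
have pt w : \prod_i \1_(A i) (xL i w) = \1_C w :> R.
  rewrite [RHS]indicE; case: (boolP (w \in C)) => wC.
    rewrite big1 // => i _; rewrite indicE mem_set //.
    by move: wC; rewrite inE => /(_ i I).
  move: wC; rewrite notin_setE /C /bigcap /= => /existsNP [i /not_implyP [_ H]].
  by rewrite (bigD1 i)//= indicE memNset // mul0r.
under eq_integral do rewrite pt.
rewrite integral_indic// setIC /F /C.
transitivity ((2^-1)%:E * \prod_(i < d) normal_prob (y0 * theta i) sigma (A i))%E; first exact: (GM y0 A hy0 mA).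
rewrite EFinM -prodEFin; congr (_ * _)%E.
by apply: eq_bigr => i _; rewrite fineK//; apply: fin_num_measure; exact: mA.
Qed.


Let phi j (A : 'I_d -> set R) (i : 'I_d) : R -> R := if (i < j)%N then g i else \1_(A i).
Let psi j (A : 'I_d -> set R) (i : 'I_d) := if (i < j)%N then G i else fine (N i (A i)).

Let S j := forall A : 'I_d -> set R, (forall i, measurable (A i)) ->
  (\int[P]_(w in F) (\prod_i phi j A i (xL i w))%:E = (2^-1 * \prod_i psi j A i)%:E)%E.

Let phi_ge0 j A i t : 0 <= phi j A i t.
Proof. by rewrite /phi; case: ifP => _ //; rewrite indicE. Qed.

Let psi_ge0 j A i : 0 <= psi j A i.
Proof. by rewrite /psi; case: ifP => _ //; apply: fine_ge0; apply: measure_ge0. Qed.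

Let mphi j A i : (forall i, measurable (A i)) -> measurable_fun F (fun w => phi j A i (xL i w)).
Proof.
move=> mA; rewrite /phi; case: ifP => _.
  exact: (measurableT_comp (mg i) (mxL i)).
exact: (measurableT_comp (measurable_indic (mA i)) (mxL i)).
Qed.

Let ltjS (i : 'I_d) j (jd : (j < d)%N) : i != Ordinal jd -> (i < j)%N = (i < j.+1)%N.
Proof.
move=> ijj; have H : (nat_of_ord i != j).
  by apply/eqP => h; move/eqP: ijj; apply; exact: val_inj.
by rewrite ltnS [(i <= j)%N]leq_eqVlt (negbTE H).
Qed.

Let Sstep j : (j < d)%N -> S j -> S j.+1.
Proof.
move=> jd IH A mA.
pose jj := Ordinal jd.
pose h w := \prod_(i | i != jj) phi j.+1 A i (xL i w).
pose k := 2^-1 * \prod_(i | i != jj) psi j.+1 A i.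
have HB B : measurable B ->
    (\int[P]_(w in F) (\1_B (xL jj w) * h w)%:E = k%:E * N jj B)%E.
  move=> mB.
  pose A' i := if i == jj then B else A i.
  have mA' i : measurable (A' i) by rewrite /A'; case: ifP.
  have E1 w : \prod_i phi j A' i (xL i w) = \1_B (xL jj w) * h w.
    rewrite (bigD1 jj)//=; congr (_ * _).
      by rewrite /phi /A' ltnn eqxx.
    apply: eq_bigr => i ijj; rewrite /phi /A' (negbTE ijj) (@ltjS i j jd ijj) //.
  have E2 : \prod_i psi j A' i = fine (N jj B) * \prod_(i | i != jj) psi j.+1 A i.
    rewrite (bigD1 jj)//=; congr (_ * _).
      by rewrite /psi /A' ltnn eqxx.
    apply: eq_bigr => i ijj; rewrite /psi /A' (negbTE ijj) (@ltjS i j jd ijj) //.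
  under eq_integral do rewrite -E1.
  rewrite IH // E2 /k -[in RHS](@fineK _ (N jj B)); last exact: fin_num_measure.
  by rewrite -EFinM; congr EFin; ring.
have mh : measurable_fun F h.
  by apply: measurable_prod_pred => i; exact: mphi.
have h0 w : F w -> 0 <= h w by move=> _; apply: prodr_ge0 => i _.
have k0 : 0 <= k by apply: mulr_ge0; [rewrite invr_ge0 ler0n | apply: prodr_ge0 => i _].
have := @gm_transfer _ _ _ (measurableTypeR R) _ P F (xL jj) h (N jj) k mF (mxL jj) mh h0 k0 HB (g jj) (mg jj) (g0 jj).
rewrite gG => Hfin.
have E3 w : \prod_i phi j.+1 A i (xL i w) = g jj (xL jj w) * h w.
  by rewrite (bigD1 jj)//=; congr (_ * _); rewrite /phi ltnSn.
have E4 : \prod_i psi j.+1 A i = G jj * \prod_(i | i != jj) psi j.+1 A i.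
  by rewrite (bigD1 jj)//=; congr (_ * _); rewrite /psi ltnSn.
under eq_integral do rewrite E3.
by rewrite Hfin E4 /k -EFinM; congr EFin; ring.
Qed.

Lemma gm_factor :
  (\int[P]_(w in yL @^-1` [set y0]) (\prod_i g i (xL i w))%:E = (2^-1 * \prod_i G i)%:E)%E.
Proof.
have HS : forall j, (j <= d)%N -> S j.
  elim => [_|j IHj jd].
    move=> A mA.
    transitivity (\int[P]_(w in F) (\prod_i \1_(A i) (xL i w))%:E)%E.
      by apply: eq_integral => w _; congr EFin; apply: eq_bigr => i _; rewrite /phi.
    exact: S0 A mA.
  by apply: Sstep => //; apply: IHj; exact: ltnW.
have := HS d (leqnn d) (fun _ => setT) (fun _ => measurableT).
have -> : \prod_i psi d (fun _ => setT) i = \prod_i G i.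
  by apply: eq_bigr => i _; rewrite /psi ltn_ord.
move=> <-; apply: eq_integral => w _; congr EFin; apply: eq_bigr => i _.
by rewrite /phi ltn_ord.
Qed.
End gm_factor_sec.
Section gm_chernoff_sec.
Context (R : realType) (dT : measure_display) (T : measurableType dT)
  (P : probability T R) (d : nat) (theta : 'I_d -> R) (sigma : R)
  (xL : 'I_d -> {RV P >-> R}) (yL : {RV P >-> R}).
Hypothesis GM : gaussian_mixture P theta sigma xL yL.

Lemma mset_le (f : T -> R) : measurable_fun setT f -> measurable [set w | f w <= 0].
Proof.
move=> mf; have -> : [set w | f w <= 0] = f @^-1` `]-oo, 0].
  by apply/seteqP; split => w /=; rewrite in_itv.
by rewrite -[_ @^-1` _]setTI; apply: mf => //; exact: measurable_itv.
Qed.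

Lemma mset_gt (f : T -> R) : measurable_fun setT f -> measurable [set w | 0 < f w].
Proof.
move=> mf; have -> : [set w | 0 < f w] = f @^-1` `]0, +oo[.
  by apply/seteqP; split => w /=; rewrite in_itv /= andbT.
by rewrite -[_ @^-1` _]setTI; apply: mf => //; exact: measurable_itv.
Qed.

Lemma gm_mdot (v : 'I_d -> R) : measurable_fun setT (fun w => dotp v (fun i => xL i w)).
Proof.
by rewrite /dotp; apply: measurable_sum => i; apply: measurable_funM.
Qed.

Lemma gm_chernoff (v : 'I_d -> R) (y0 : R) :
  \sum_i v i ^+ 2 = 1 -> 0 < sigma -> 0 <= dotp v theta -> (y0 = 1 \/ y0 = -1) ->
  (P (yL @^-1` [set y0] `&` [set w | (y0 * dotp v (fun i => xL i w) <= 0)%R]) <=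
   (2^-1 * expR (- (dotp v theta) ^+ 2 / (2 * sigma ^+ 2)))%R%:E)%E.
Proof.
move=> hv hs hmu hy0.
have y02 : y0 ^+ 2 = 1 by case: hy0 => ->; rewrite ?sqrrN expr1n.
set mu := dotp v theta.
set lam := mu / sigma ^+ 2.
have lam0 : 0 <= lam by rewrite divr_ge0// sqr_ge0.
pose a i := - (lam * y0 * v i).
pose g i t := expR (a i * t).
pose G i := expR (a i * (y0 * theta i) + a i ^+ 2 * sigma ^+ 2 / 2).
have mg i : measurable_fun setT (g i).
  by apply: measurableT_comp => //; exact: measurable_funM.
have g0 i t : 0 <= g i t by exact: expR_ge0.
have gG i : (\int[normal_prob (y0 * theta i) sigma]_t (g i t)%:E = (G i)%:E)%E.
  by apply: normal_mgf; rewrite gt_eqF.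
have Hf := @gm_factor _ _ _ P d theta sigma xL yL GM y0 hy0 g G mg g0 gG.
have HG : \prod_i G i = expR (- mu ^+ 2 / (2 * sigma ^+ 2)).
  rewrite /G -expR_sum; congr expR.
  transitivity (\sum_i (- (lam * y0 ^+ 2) * (v i * theta i) + (lam ^+ 2 * y0 ^+ 2 * sigma ^+ 2 / 2) * v i ^+ 2)).
    by apply: eq_bigr => i _; rewrite /a; ring.
  rewrite big_split /= -!mulr_sumr hv -/(dotp v theta) -/mu y02 /lam.
  by field; rewrite gt_eqF.
set F := yL @^-1` [set y0].
set Bad := [set w | y0 * dotp v (fun i => xL i w) <= 0].
have mF : measurable F.
  by rewrite /F -[_ @^-1` _]setTI; apply: (measurable_funPT yL).
have mBad : measurable Bad.
  apply: mset_le; apply: measurable_funM => //; exact: gm_mdot.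
rewrite -/mu -HG -Hf setIC -integral_indic//.
apply: ge0_le_integral => //.
- by apply/measurable_EFinP; apply: measurable_funTS; exact: measurable_indic.
- apply/measurable_EFinP; apply: measurable_prod_pred => i.
  apply: measurableT_comp => //; apply: measurable_funTS; exact: measurable_funPT.
move=> w Fw; rewrite lee_fin indicE.
have -> : \prod_i g i (xL i w) = expR (- lam * (y0 * dotp v (fun i => xL i w))).
  rewrite /g -expR_sum; congr expR; rewrite /dotp mulr_sumr mulr_sumr.
  by apply: eq_bigr => i _; rewrite /a; ring.
case: (boolP (w \in Bad)) => wB; last exact: expR_ge0.
rewrite -expR0 ler_expR mulNr oppr_ge0; apply: mulr_ge0_le0 => //.
by move: wB; rewrite inE.
Qed.
End gm_chernoff_sec.
Lemma ereal_aux (R : realType) (x y : \bar R) (a b : R) :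
  (0 <= x)%E -> (0 <= y)%E -> a%:E = (x + y)%E -> (x <= b%:E)%E -> ((a - b)%:E <= y)%E.
Proof.
move: x y => [x| |] [y| |] //= x0 y0.
- by move=> [->]; rewrite !lee_fin => xb; lra.

Qed.

Theorem lemma2 (R : realType) (dT : measure_display) (T : measurableType dT)
    (P : probability T R) (d : nat) (theta : 'I_d -> R) (sigma : R)
    (xL : 'I_d -> {RV P >-> R}) (yL : {RV P >-> R})
    (v : 'I_d -> R) (tau : R) :
  l2norm theta = Num.sqrt d%:R ->
  0 < sigma ->
  gaussian_mixture P theta sigma xL yL ->
  l2norm v = 1 ->
  l2norm (fun i => v i - theta i / Num.sqrt d%:R) <= tau ->
  tau < Num.sqrt 2 ->
  ((1 - expR (- (d%:R * (1 - tau ^+ 2 / 2) ^+ 2) / (2 * sigma ^+ 2)))%:E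
    <= P [set w | 0 < Num.sg (yL w * dotp v (fun i => xL i w)) * dotp v theta]%R)%E.
Proof.
move=> Htheta Hs GM Hv Htau Htau2.
set mu := dotp v theta.
have Sv : \sum_i v i ^+ 2 = 1.
  rewrite -[LHS]sqr_sqrtr; last by apply: sumr_ge0 => i _; exact: sqr_ge0.
  by move: Hv; rewrite /l2norm => ->; rewrite expr1n.
have St : \sum_i theta i ^+ 2 = d%:R.
  rewrite -[LHS]sqr_sqrtr; last by apply: sumr_ge0 => i _; exact: sqr_ge0.
  by move: Htheta; rewrite /l2norm => ->; rewrite sqr_sqrtr.
have d0 : (0 < d)%N.
  case: (posnP d) => // d0; exfalso.
  have : \sum_i v i ^+ 2 = 0.
    apply: big1 => i _; have := ltn_ord i; move: (nat_of_ord i) => k.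
    by rewrite d0 ltn0.
  by rewrite Sv => /eqP; rewrite oner_eq0.
set s := Num.sqrt (d%:R : R).
have s0 : 0 < s by rewrite sqrtr_gt0 ltr0n.
have s2 : s ^+ 2 = d%:R by rewrite sqr_sqrtr.
set q := \sum_i (v i - theta i / s) ^+ 2.
have Hq : q = 2 - 2 * mu / s.
  have -> : q = \sum_i v i ^+ 2 + s^-2 * \sum_i theta i ^+ 2 - 2 / s * mu.
    rewrite /mu /dotp !mulr_sumr -big_split -sumrB /=; apply: eq_bigr => i _.
    by field; rewrite gt_eqF.
  by rewrite Sv St -s2; field; rewrite gt_eqF.
have Hq0 : 0 <= q by apply: sumr_ge0 => i _; exact: sqr_ge0.
have sq0 : 0 <= Num.sqrt q by exact: sqrtr_ge0.
have sq2 : Num.sqrt q ^+ 2 = q by rewrite sqr_sqrtr.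
have Htau' : Num.sqrt q <= tau by exact: Htau.
have tau0 : 0 <= tau by exact: le_trans sq0 Htau'.
have Hqt : q <= tau ^+ 2 by nra.
have r2 : Num.sqrt 2 ^+ 2 = 2 :> R by rewrite sqr_sqrtr.
have r20 : 0 <= Num.sqrt 2 :> R by exact: sqrtr_ge0.
have tau2 : tau ^+ 2 < 2 by nra.
set c := 1 - tau ^+ 2 / 2.
have c0 : 0 < c by rewrite /c; lra.
have Hmu : mu = s * (2 - q) / 2.
  by rewrite Hq; field; rewrite gt_eqF.
have muc : s * c <= mu by rewrite Hmu /c; nra.
have mu0 : 0 < mu by apply: lt_le_trans muc; exact: mulr_gt0.
have mu2 : d%:R * c ^+ 2 <= mu ^+ 2.
  have sc0 : 0 <= s * c by rewrite mulr_ge0// ltW.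
  have := ler_pM sc0 sc0 muc muc.
  by rewrite -s2 -exprMn expr2 [X in _ -> _ <= X]expr2.
set B := expR (- mu ^+ 2 / (2 * sigma ^+ 2)).
have HB : B <= expR (- (d%:R * c ^+ 2) / (2 * sigma ^+ 2)).
  rewrite ler_expR !mulNr lerN2; apply: ler_wpM2r => //.
  by rewrite invr_ge0 mulr_ge0// sqr_ge0.
have Hc y0 : (y0 = 1 \/ y0 = -1) ->
    (P (yL @^-1` [set y0] `&` [set w | (y0 * dotp v (fun i => xL i w) <= 0)%R]) <=
     (2^-1 * B)%:E)%E.
  by move=> hy; exact: (@gm_chernoff _ _ _ P d theta sigma xL yL GM v y0 Sv Hs (ltW mu0) hy).
have mdotf := @gm_mdot _ _ _ P d xL v.
set dot := fun w => dotp v (fun i => xL i w).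
have mFy y0 : measurable (yL @^-1` [set y0]).
  by rewrite -[_ @^-1` _]setTI; apply: (measurable_funPT yL).
have mBad y0 : measurable [set w | (y0 * dot w <= 0)%R].
  by apply: mset_le; apply: measurable_funM.
have HF y0 : (y0 = 1 \/ y0 = -1) -> P (yL @^-1` [set y0]) = (2^-1)%:E.
  move=> hy.
  transitivity (P (yL @^-1` [set y0] `&` \bigcap_(i in [set: 'I_d]) (xL i @^-1` [set: R]))).
    by congr (P _); apply/seteqP; split => [w Fw|w []//]; split => // i _.
  etransitivity; first exact: (GM y0 (fun _ => setT) hy (fun _ => measurableT)).
  by rewrite big1 ?mule1 // => i _; exact: probability_setT.
have HU y0 : (y0 = 1 \/ y0 = -1) ->
    (((2^-1 - 2^-1 * B)%:E) <= P (yL @^-1` [set y0] `\` [set w | (y0 * dot w <= 0)%R]))%E.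
  move=> hy; apply: (@ereal_aux R (P (yL @^-1` [set y0] `&` [set w | (y0 * dot w <= 0)%R]))).

  - exact: measure_ge0.
  - exact: measure_ge0.
  - by rewrite -(HF y0 hy) addeC -measureDI.
  - exact: Hc.
set S := [set w | _].
have USy y0 w : (yL @^-1` [set y0] `\` [set w | (y0 * dot w <= 0)%R]) w -> S w.
  move=> [/= Hy] /negP; rewrite -ltNge => H.
  by rewrite /S /= Hy (gtr0_sg H) mul1r.
have mS : measurable S.
  have -> : S = [set w | 0 < yL w * dot w].
    by apply/seteqP; split => w; rewrite /S /= pmulr_lgt0// sgr_gt0.
  by apply: mset_gt; apply: measurable_funM => //; exact: measurable_funPT.
have disj : (yL @^-1` [set 1] `\` [set w | (1 * dot w <= 0)%R]) `&`
    (yL @^-1` [set -1] `\` [set w | (-1 * dot w <= 0)%R]) = set0.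
  apply/seteqP; split => // w /= [[h1 _] [h2 _]]; lra.
apply: (@le_trans _ _ (P (yL @^-1` [set 1] `\` [set w | (1 * dot w <= 0)%R] `|`
    yL @^-1` [set -1] `\` [set w | (-1 * dot w <= 0)%R]))); last first.
  apply: le_measure; rewrite ?inE.
  - by apply: measurableU; apply: measurableD.
  - exact: mS.
  - by move=> w [] /USy.
rewrite measureU//; last 2 first.
  - exact: measurableD.
  - exact: measurableD.
apply: (@le_trans _ _ ((2^-1 - 2^-1 * B)%:E + (2^-1 - 2^-1 * B)%:E)%E); last first.
  by apply: leeD; apply: HU; [left|right].
rewrite -EFinD lee_fin -/c.
lra.
Qed.
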